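(* Let $n\ge 2$, let $P=(P_1,\dots,P_t)$ be a partition of $\{1,\dots,n+1\}$, $n_i=|P_i|$, and ${\cal K}={\cal K}(P)$. Then: (ii) $Cox({\cal K})$ is isomorphic to $\prod_{i=1}^t Sym(1+n_i)$, so its order is $\prod_{i=1}^t (n_i+1)!$; (iii) $Cox({\cal K})=Aut({\cal K})$ if and only if the parts of $P$ have pairwise different sizes; (iv) $Cox({\cal K})$ acts transitively on the $n$-faces of ${\cal K}$.
   Context: For a partition $P=(P_1,\dots,P_t)$ of $\{1,\dots,n+1\}$, ${\cal K}(P)$ is the simplicial complex on the vertex set $\{1,\dots,n+1\}\cup\{p_1,\dots,p_t\}$ ($t$ new vertices) whose $n$-faces are the sets $\{y_1,\dots,y_{n+1}\}$ with, for each $i$, $y_i=i$ or $y_i=p_j$ where $i\in P_j$, subject to the $y_i$ being pairwise distinct; its faces are all nonempty subsets of these. $Aut({\cal K})$ is the group of permutations of the vertices of ${\cal K}$ mapping the set of faces onto itself. For $i\in\{1,\dots,n+1\}$ with $i\in P_j$, let $g_i$ be the permutation of the vertex set of ${\cal K}(P)$ exchanging $i$ and $p_j$ and fixing all other vertices (this is the ''reflection'' of the facet $\{1,\dots,n+1\}$ across its $(n-1)$-face $\{1,\dots,n+1\}\setminus\{i\}$, and is an automorphism of ${\cal K}(P)$). $Cox({\cal K})$ is the subgroup of $Aut({\cal K})$ generated by $g_1,\dots,g_{n+1}$. *)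

(* Defs.v *)
From HB Require Import structures.
From mathcomp Require Import all_boot all_fingroup.
Set Implicit Arguments. Unset Strict Implicit. Unset Printing Implicit Defensive.

(* The vertices 1..n+1 are encoded as 'I_n.+1 (vertex i+1 <-> ordinal i);
   the ordered partition P = (P_1,...,P_t) of {1..n+1} is encoded by its
   block-labelling map f : 'I_n.+1 -> 'I_t (i lies in P_(f i)), required to
   be surjective (all blocks nonempty).  The new vertices p_1..p_t are inr j. *)
Definition vert (n t : nat) := ('I_n.+1 + 'I_t)%type.

Definition yv (n t : nat) (f : 'I_n.+1 -> 'I_t) (c : {ffun 'I_n.+1 -> bool})
  (i : 'I_n.+1) : vert n t := if c i then inr (f i) else inl i.

Definition is_nface (n t : nat) (f : 'I_n.+1 -> 'I_t) (S : {set vert n t}) : bool :=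
  [exists c : {ffun 'I_n.+1 -> bool},
     injectiveb (yv f c) && (S == [set yv f c i | i : 'I_n.+1])].

Definition is_face (n t : nat) (f : 'I_n.+1 -> 'I_t) (S : {set vert n t}) : bool :=
  (S != set0) && [exists F : {set vert n t}, is_nface f F && (S \subset F)].

Definition AutK (n t : nat) (f : 'I_n.+1 -> 'I_t) : {set {perm vert n t}} :=
  [set g : {perm vert n t} | [forall S : {set vert n t}, is_face f (g @: S) == is_face f S]].

Definition gen (n t : nat) (f : 'I_n.+1 -> 'I_t) (i : 'I_n.+1) : {perm vert n t} :=
  tperm (inl i) (inr (f i)).

Definition CoxK (n t : nat) (f : 'I_n.+1 -> 'I_t) : {set {perm vert n t}} :=
  <<[set gen f i | i : 'I_n.+1]>>%g.

Definition part_size (n t : nat) (f : 'I_n.+1 -> 'I_t) (j : 'I_t) : nat :=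
  #|[set i : 'I_n.+1 | f i == j]|.

(* prod_{j} Sym(1+n_j), realised as the permutations of the disjoint union
   of the sets {0..n_j} (j < t) that preserve each summand. *)
Definition prodSym_type (n t : nat) (f : 'I_n.+1 -> 'I_t) : finType :=
  {j : 'I_t & 'I_(part_size f j).+1}.

Definition ProdSym (n t : nat) (f : 'I_n.+1 -> 'I_t) : {set {perm prodSym_type f}} :=
  [set s : {perm prodSym_type f} | [forall x, tag (s x) == tag x]].

(* Main.v *)
Require Import Defs.
From HB Require Import structures.
From mathcomp Require Import all_boot all_fingroup.
Set Implicit Arguments. Unset Strict Implicit. Unset Printing Implicit Defensive.
Import GroupScope.


Definition blk n t (f : 'I_n.+1 -> 'I_t) (v : vert n t) : 'I_t :=
  match v with inl i => f i | inr j => j end.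

Definition B n t (f : 'I_n.+1 -> 'I_t) (j : 'I_t) : {set vert n t} :=
  [set v | blk f v == j].

Lemma inrB n t (f : 'I_n.+1 -> 'I_t) j : (inr j : vert n t) \in B f j.
Proof. by rewrite inE. Qed.

Lemma blk_yv n t (f : 'I_n.+1 -> 'I_t) c i : blk f (yv f c i) = f i.
Proof. by rewrite /yv; case: (c i). Qed.

Lemma is_faceE n t (f : 'I_n.+1 -> 'I_t) (S : {set vert n t}) :
  is_face f S = (S != set0) && [forall j, ~~ (B f j \subset S)].
Proof.
rewrite /is_face; congr (_ && _).
apply/existsP/forallP.
- case=> F /andP[/existsP[c /andP[/injectiveP inj /eqP ->]] sSF] j.
  apply/negP=> /subsetP sBF.
  have /sBF := inrB f j; move/(subsetP sSF)=> /imsetP[i0 _].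
  rewrite /yv; case ci0: (c i0) => // -[fi0].
  have : (inl i0 : vert n t) \in B f j by rewrite inE /= fi0.
  move/sBF/(subsetP sSF)=> /imsetP[i1 _].
  rewrite /yv; case ci1: (c i1) => // -[ei]; subst i1.
  by rewrite ci1 in ci0.
- move=> H.
  pose k j := [pick i | (f i == j) && ((inl i : vert n t) \notin S)].
  pose c := [ffun i => ((inr (f i) : vert n t) \in S) && (k (f i) == Some i)].
  exists [set yv f c i | i : 'I_n.+1]; apply/andP; split.
    apply/existsP; exists c; rewrite eqxx andbT; apply/injectiveP.
    move=> i i'; rewrite /yv !ffunE.
    case: ifP => [/andP[_ /eqP ki]|_]; case: ifP => [/andP[_ /eqP ki']|_] //; try by case.
    by case=> e; rewrite e ki' in ki; case: ki.
  apply/subsetP=> v vS; apply/imsetP.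
  case: v vS => [i|j] vS.
    exists i => //; rewrite /yv ffunE.
    case: (inr _ \in S) => //=; case: eqP => // ki.
    by move: ki; rewrite /k; case: pickP => // i0 /andP[_ ni0] [e]; subst i0; rewrite vS in ni0.
  have := H j; case/subsetPn=> w wB wS.
  case: w wB wS => [i|j'] wB wS; last by rewrite inE /= in wB; rewrite (eqP wB) vS in wS.
  rewrite inE /= in wB.
  have [i0 ki0] : exists i0, k j = Some i0.
    rewrite /k; case: pickP => [i0 _|/(_ i)]; first by exists i0.
    by rewrite wB wS.
  exists i0 => //; rewrite /yv ffunE.
  have fi0 : f i0 = j by move: ki0; rewrite /k; case: pickP => // x /andP[/eqP ? _] [<-].
  by rewrite fi0 vS ki0 eqxx.
Qed.


Definition Blk n t (f : 'I_n.+1 -> 'I_t) : {set {perm vert n t}} :=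
  [set g : {perm vert n t} | [forall v, blk f (g v) == blk f v]].

Lemma BlkP n t (f : 'I_n.+1 -> 'I_t) (g : {perm vert n t}) :
  reflect (forall v, blk f (g v) = blk f v) (g \in Blk f).
Proof. by rewrite inE; apply: (iffP forallP) => H v; apply/eqP. Qed.

Lemma Blk_group_set n t (f : 'I_n.+1 -> 'I_t) : group_set (Blk f).
Proof.
apply/group_setP; split; first by apply/BlkP=> v; rewrite perm1.
move=> x y /BlkP Hx /BlkP Hy; apply/BlkP=> v; by rewrite permM Hy Hx.
Qed.

Canonical Blk_group n t (f : 'I_n.+1 -> 'I_t) := Group (Blk_group_set f).

Lemma tperm_Cox n t (f : 'I_n.+1 -> 'I_t) (a b : vert n t) :
  blk f a = blk f b -> tperm a b \in CoxK f.
Proof.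
have gC i : gen f i \in CoxK f by apply: mem_gen; apply: imset_f.
have H1 i j : f i = j -> tperm (inl i : vert n t) (inr j) \in CoxK f.
  by move=> <-; apply: gC.
have H2 i i' : f i = f i' -> tperm (inl i : vert n t) (inl i') \in CoxK f.
  move=> e; have [->|ne] := eqVneq i i'; first by rewrite tperm1 group1.
  have -> : tperm (inl i : vert n t) (inl i') = (gen f i) ^ (gen f i').
    rewrite /gen tpermJ e tpermR tpermD //.
    by apply/eqP; case=> e'; rewrite e' eqxx in ne.
  by rewrite groupJ.
case: a => [i|j]; case: b => [i'|j'] /= e.
- exact: H2.
- exact: H1.
- by rewrite tpermC; apply: H1.
- by rewrite e tperm1 group1.
Qed.

Lemma Blk_sub_Cox n t (f : 'I_n.+1 -> 'I_t) : Blk f \subset CoxK f.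
Proof.
apply/subsetP => g.
have [m Hm] : exists m, #|[set v | g v != v]| <= m by exists #|[set v | g v != v]|.
elim: m g Hm => [|m IH] g Hm gB.
  suff -> : g = 1 by rewrite group1.
  apply/permP=> v; rewrite perm1; apply/eqP.
  have : v \notin [set v | g v != v].
    by move: Hm; rewrite leqn0 => /eqP/cards0_eq ->; rewrite inE.
  by rewrite inE negbK.
have [e0|] := eqVneq [set v | g v != v] set0.
  apply: (IH g) => //; by rewrite e0 cards0.
case/set0Pn=> v; rewrite inE => mv.
set w := g v.
have bw : blk f v = blk f w by rewrite /w (BlkP _ _ gB).
have -> : g = (g * tperm v w) * tperm v w by rewrite -mulgA tperm2 mulg1.
rewrite groupM ?tperm_Cox //; apply: (IH _ _ (groupM gB _)); last first.
  by apply/BlkP=> x; case: tpermP => // ->; rewrite bw.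
have sub : [set x | (g * tperm v w) x != x] \subset [set x | g x != x] :\ v.
  apply/subsetP=> x; rewrite !inE permM.
  have [->|nxv] := eqVneq x v; first by rewrite tpermR eqxx.
  apply: contraNN => /eqP gx; rewrite gx tpermD //; last first.
    apply: contra nxv => /eqP xw.
    by apply/eqP; apply: (perm_inj (s:=g)); rewrite gx -xw.
  by rewrite eq_sym.
have := subset_leq_card sub.
move: Hm; rewrite (cardsD1 v [set _ | _]) inE mv /= add1n ltnS.
move=> Hm le; exact: leq_trans le Hm.
Qed.


Lemma CoxE n t (f : 'I_n.+1 -> 'I_t) : CoxK f = Blk f.
Proof.
apply/eqP; rewrite eqEsubset Blk_sub_Cox andbT.
rewrite /CoxK gen_subG; apply/subsetP=> g /imsetP[i _ ->].
by apply/BlkP=> v; rewrite /gen; case: tpermP => // ->.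
Qed.

Lemma memJ (T : finType) (g : {perm T}) (X : {set T}) x :
  (x \in g @: X) = (g^-1 x \in X).
Proof. by rewrite -{1}(permKV g x) mem_imset //; exact: perm_inj. Qed.

Lemma tau_face n t (f : 'I_n.+1 -> 'I_t) (g : {perm vert n t}) (tau : {perm 'I_t}) :
  (forall v, blk f (g v) = tau (blk f v)) ->
  forall S : {set vert n t}, is_face f (g @: S) = is_face f S.
Proof.
move=> Hg S; rewrite !is_faceE imset_eq0; congr (_ && _).
apply/forallP/forallP => H j; apply/negP => sub.
- have /negP := H (tau j); apply; apply/subsetP => w; rewrite inE memJ => /eqP bw.
  apply: (subsetP sub); rewrite inE; apply/eqP; apply: (@perm_inj _ tau).
  by rewrite -Hg permKV.
- have /negP := H (tau^-1 j); apply; apply/subsetP => v; rewrite inE => /eqP bv.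
  have : g v \in g @: S.
    by apply: (subsetP sub); rewrite inE Hg bv permKV.
  by rewrite mem_imset //; exact: perm_inj.
Qed.

Lemma Blk_sub_Aut n t (f : 'I_n.+1 -> 'I_t) : Blk f \subset AutK f.
Proof.
apply/subsetP=> g /BlkP Hg; rewrite inE; apply/forallP=> S; apply/eqP.
by apply: (tau_face (tau := 1)) => v; rewrite perm1.
Qed.

Lemma AutP n t (f : 'I_n.+1 -> 'I_t) (g : {perm vert n t}) :
  reflect (forall S : {set vert n t}, is_face f (g @: S) = is_face f S) (g \in AutK f).
Proof. by rewrite inE; apply: (iffP forallP) => H S; apply/eqP. Qed.

Lemma Aut_inv n t (f : 'I_n.+1 -> 'I_t) (g : {perm vert n t}) :
  g \in AutK f -> g^-1 \in AutK f.
Proof.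
move/AutP=> H; apply/AutP=> S; rewrite -H.
congr is_face; apply/setP=> x; rewrite memJ mem_imset //; exact: perm_inj.
Qed.


Lemma cardB n t (f : 'I_n.+1 -> 'I_t) j : #|B f j| = (part_size f j).+1.
Proof.
have inl_inj : injective (@inl 'I_n.+1 'I_t) by move=> a b [].
have -> : B f j = inr j |: [set inl i | i in [set i | f i == j]].
  apply/setP=> v; rewrite !inE; case: v => [i|j'] /=.
    by rewrite mem_imset // inE.
  apply/eqP/orP => [->|[/eqP[]//|/imsetP[? _ //]]]; by left.
rewrite cardsU1 card_imset // /part_size.
by case: imsetP => // -[? _ //].
Qed.

Lemma face_B n t (f : 'I_n.+1 -> 'I_t) j : is_face f (B f j) = false.
Proof.
by rewrite is_faceE; apply/negbTE; rewrite negb_and; apply/orP; right;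
   apply/forallPn; exists j; rewrite negbK.
Qed.

Lemma Aut_contains n t (f : 'I_n.+1 -> 'I_t) (g : {perm vert n t}) j :
  g \in AutK f -> exists k, B f k \subset g @: B f j.
Proof.
move/AutP=> H; have := H (B f j); rewrite face_B is_faceE.
have -> : (g @: B f j != set0) by rewrite imset_eq0; apply/set0Pn; exists (inr j); exact: inrB.
by move/negbT/forallPn => [k]; rewrite negbK; exists k.
Qed.

Lemma Aut_sub_Blk n t (f : 'I_n.+1 -> 'I_t) :
  (forall j k : 'I_t, j != k -> part_size f j != part_size f k) ->
  AutK f \subset Blk f.
Proof.
move=> Hd; apply/subsetP=> g gA.
have giA := Aut_inv gA.
have E j : g^-1 @: B f j = B f j.
  have [k sk] := Aut_contains j gA.
  have s1 : g^-1 @: B f k \subset B f j.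
    apply/subsetP=> x; rewrite memJ invgK => /(subsetP sk).
    by rewrite memJ permK.
  have [l sl] := Aut_contains k giA.
  have lj : l = j.
    have := subsetP (subset_trans sl s1) _ (inrB f l).
    by rewrite inE => /eqP.
  subst l.
  have eqs : g^-1 @: B f k = B f j by apply/eqP; rewrite eqEsubset s1 sl.
  have kj : k = j.
    apply/eqP; apply: contraT => nkj.
    have := Hd _ _ nkj; rewrite -eqSS -!cardB -eqs card_imset ?eqxx //.
    exact: perm_inj.
  by move: eqs; rewrite kj.
apply/BlkP=> v.
have : v \in g^-1 @: B f (blk f (g v)).
  by rewrite memJ invgK inE.
by rewrite E inE => /eqP.
Qed.


Lemma swap_exists n t (f : 'I_n.+1 -> 'I_t) (j k : 'I_t) :
  j != k -> part_size f j = part_size f k ->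
  exists g : {perm vert n t}, g \in AutK f /\ g \notin Blk f.
Proof.
move=> njk ps.
have E : #|B f j| = #|B f k| by rewrite !cardB ps.
pose h (v : vert n t) : vert n t :=
  if v \in B f j then enum_val (cast_ord E (enum_rank_in (inrB f j) v))
  else if v \in B f k then enum_val (cast_ord (esym E) (enum_rank_in (inrB f k) v))
  else v.
have Bjk v : v \in B f j -> v \in B f k = false.
  rewrite !inE => /eqP ->; exact/negbTE.
have Bkj v : v \in B f k -> v \in B f j = false.
  by move=> vk; apply/negP => /Bjk; rewrite vk.
have hh : involutive h.
  move=> v; rewrite {2}/h.
  case: ifP => vj.
    have e1 := enum_valP (cast_ord E (enum_rank_in (inrB f j) v)).
    by rewrite /h (Bkj _ e1) e1 enum_valK_in cast_ordK enum_rankK_in.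
  case: ifP => vk; last by rewrite /h vj vk.
  have e1 := enum_valP (cast_ord (esym E) (enum_rank_in (inrB f k) v)).
  by rewrite /h e1 enum_valK_in cast_ordKV enum_rankK_in.
have tau_h v : blk f (h v) = tperm j k (blk f v).
  rewrite /h; case: ifP => vj.
    have := enum_valP (cast_ord E (enum_rank_in (inrB f j) v)).
    by rewrite !inE in vj * => /eqP ->; rewrite (eqP vj) tpermL.
  case: ifP => vk.
    have := enum_valP (cast_ord (esym E) (enum_rank_in (inrB f k) v)).
    by rewrite !inE in vk * => /eqP ->; rewrite (eqP vk) tpermR.
  rewrite !inE in vj vk; rewrite tpermD //; by rewrite eq_sym ?vj ?vk.
exists (perm (can_inj hh)); split.
  apply/AutP; apply: (tau_face (tau := tperm j k)) => v; by rewrite permE.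
apply/negP => /BlkP /(_ (inr j)); rewrite permE tau_h /= tpermL.
by move/eqP; rewrite eq_sym (negbTE njk).
Qed.


Lemma nface_base n t (f : 'I_n.+1 -> 'I_t) (S : {set vert n t}) :
  is_nface f S -> exists2 g : {perm vert n t}, g \in Blk f &
     g @: [set (inl i : vert n t) | i : 'I_n.+1] = S.
Proof.
case/existsP=> c /andP[/injectiveP inj /eqP ->].
pose h (v : vert n t) : vert n t := match v with
  | inl i => yv f c i
  | inr j => if [pick i | c i && (f i == j)] is Some i then inl i else inr j end.
have hh : involutive h.
  case=> [i|j] /=.
    rewrite /yv; case ci: (c i) => /=; last by rewrite /yv ci.
    case: pickP => [i0 /andP[ci0 /eqP fi0]|/(_ i)]; last by rewrite ci eqxx.
    congr inl; apply: inj; by rewrite /yv ci ci0 fi0.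
  case: (pickP (fun i => c i && (f i == j))) => [i0 /andP[ci0 /eqP fi0]|H] /=.
    by rewrite /yv ci0 fi0.
  by case: pickP => // i0; rewrite H.
exists (perm (can_inj hh)).
  apply/BlkP; case=> [i|j]; rewrite permE /=; first exact: blk_yv.
  by case: pickP => [i0 /andP[_ /eqP]|].
rewrite -imset_comp; apply: eq_imset => i; by rewrite /= permE.
Qed.

Lemma imsetM (T : finType) (g h : {perm T}) (S : {set T}) :
  (g * h) @: S = h @: (g @: S).
Proof. by rewrite -imset_comp; apply: eq_imset => x; rewrite /= permM. Qed.

Lemma imsetVK (T : finType) (g : {perm T}) (S : {set T}) :
  g^-1 @: (g @: S) = S.
Proof. by rewrite -imsetM mulgV; apply/setP => x; rewrite -{1}(perm1 x) mem_imset ?perm1 //; exact: perm_inj. Qed.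

Lemma nface_trans n t (f : 'I_n.+1 -> 'I_t) (S T : {set vert n t}) :
  is_nface f S -> is_nface f T -> exists2 g, g \in Blk f & g @: S = T.
Proof.
move=> /nface_base[g gB <-] /nface_base[h hB <-].
exists (g^-1 * h); first by rewrite groupM ?groupV.
by rewrite imsetM imsetVK.
Qed.


Definition psi n t (f : 'I_n.+1 -> 'I_t) (x : prodSym_type f) : vert n t :=
  enum_val (cast_ord (esym (cardB f (tag x))) (tagged x)).

Definition phi n t (f : 'I_n.+1 -> 'I_t) (v : vert n t) : prodSym_type f :=
  Tagged (fun j => 'I_(part_size f j).+1)
    (cast_ord (cardB f (blk f v)) (enum_rank_in (inrB f (blk f v)) v)).

Arguments psi {n t} f x.
Arguments phi {n t} f v.

Lemma phiK n t (f : 'I_n.+1 -> 'I_t) : cancel (phi f) (psi f).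
Proof.
move=> v; rewrite /psi /phi /= cast_ordK enum_rankK_in //.
by rewrite inE.
Qed.

Lemma blk_psi n t (f : 'I_n.+1 -> 'I_t) x : blk f (psi f x) = tag x.
Proof. by have := enum_valP (cast_ord (esym (cardB f (tag x))) (tagged x)); rewrite inE => /eqP. Qed.

Lemma psi_inj n t (f : 'I_n.+1 -> 'I_t) : injective (psi f).
Proof.
move=> [j a] [j' a'] e.
have ejj : j = j' by have := @blk_psi n t f (existT _ j a); rewrite e blk_psi.
subst j'; move: e; rewrite /psi /= => /enum_val_inj /cast_ord_inj -> //.
Qed.

Lemma psiK n t (f : 'I_n.+1 -> 'I_t) : cancel (psi f) (phi f).
Proof. by move=> x; apply: psi_inj; rewrite phiK. Qed.


Lemma cm_inj n t (f : 'I_n.+1 -> 'I_t) (g : {perm vert n t}) :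
  injective (fun x => phi f (g (psi f x))).
Proof.
exact: inj_comp (can_inj (phiK f)) (inj_comp (@perm_inj _ g) (@psi_inj n t f)).
Qed.

Arguments cm_inj {n t} f g.

Definition cm n t (f : 'I_n.+1 -> 'I_t) (g : {perm vert n t}) : {perm prodSym_type f} :=
  perm (cm_inj f g).

Lemma cmE n t (f : 'I_n.+1 -> 'I_t) (g : {perm vert n t}) (x : prodSym_type f) : cm f g x = phi f (g (psi f x)).
Proof. by rewrite permE. Qed.

Lemma cmM n t (f : 'I_n.+1 -> 'I_t) : {in setT &, {morph cm f : x y / x * y}}.
Proof.
move=> g h _ _; apply/permP => x; by rewrite !permM !cmE phiK permM.
Qed.

Canonical cm_morph n t (f : 'I_n.+1 -> 'I_t) := @Morphism _ _ setT (cm f) (cmM f).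

Lemma cm_injm n t (f : 'I_n.+1 -> 'I_t) : 'injm (cm_morph f).
Proof.
apply/injmP => g h _ _ /= e; apply/permP => v.
have := congr1 (fun s : {perm prodSym_type f} => s (phi f v)) e.
by rewrite /= !cmE !phiK => /(can_inj (phiK f)).
Qed.

Lemma cm_im n t (f : 'I_n.+1 -> 'I_t) : cm_morph f @* Blk f = ProdSym f.
Proof.
rewrite morphimEsub ?subsetT //; apply/setP => s; apply/imsetP/idP.
- case=> g /BlkP gB -> /=; rewrite inE; apply/forallP => x.
  by rewrite cmE /= gB blk_psi.
- rewrite inE => /forallP sP.
  have inj : injective (fun v => psi f (s (phi f v))).
    exact: inj_comp (@psi_inj n t f) (inj_comp (@perm_inj _ s) (can_inj (phiK f))).
  exists (perm inj).
    by apply/BlkP => v; rewrite permE blk_psi (eqP (sP _)).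
  by apply/permP => x; rewrite /= cmE permE !psiK.
Qed.

Lemma Blk_isog n t (f : 'I_n.+1 -> 'I_t) : Blk f \isog ProdSym f.
Proof. by rewrite -cm_im; apply: sub_isog; [exact: subsetT | exact: cm_injm]. Qed.


Lemma Tagged_as_eq (I : eqType) (T_ : I -> Type) (u v : {i : I & T_ i}) :
  tag v = tag u -> Tagged T_ (tagged_as u v) = v.
Proof. by case: u => i x; case: v => i' y /= e; subst i'; rewrite tagged_asE. Qed.

Lemma Tagged_as_eq' (I : eqType) (T_ : I -> Type) i (x : T_ i) (v : {i : I & T_ i}) :
  tag v = i -> @Tagged I i T_ (tagged_as (Tagged T_ x) v) = v.
Proof. by case: v => i' y /= e; subst i'; rewrite tagged_asE. Qed.

Definition DF n t (f : 'I_n.+1 -> 'I_t) :=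
  {dffun forall j : 'I_t, {perm 'I_(part_size f j).+1}}.

Lemma Phi_inj n t (f : 'I_n.+1 -> 'I_t) (F : DF f) :
  injective (fun x : prodSym_type f => Tagged (fun j => 'I_(part_size f j).+1) (F (tag x) (tagged x))).
Proof.
move=> [j a] [j' a'] /= e.
have ejj : j = j' by have := congr1 tag e.
subst j'; have /perm_inj -> := eq_from_Tagged e; by [].
Qed.

Arguments Phi_inj {n t f} F.

Definition Phi n t (f : 'I_n.+1 -> 'I_t) (F : DF f) : {perm prodSym_type f} :=
  perm (Phi_inj F).

Lemma card_ProdSym n t (f : 'I_n.+1 -> 'I_t) :
  #|ProdSym f| = (\prod_(j < t) (part_size f j).+1`!)%N.
Proof.
have PhiI : injective (@Phi n t f).
  move=> F G e; apply/ffunP => j; apply/permP => a.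
  have := congr1 (fun s : {perm prodSym_type f} => s (Tagged (fun j => 'I_(part_size f j).+1) a)) e.
  rewrite /Phi !permE /= => e'; exact: eq_from_Tagged e'.
have -> : ProdSym f = @Phi n t f @: setT.
  apply/setP => s; apply/idP/imsetP.
  - rewrite inE => /forallP sP.
    have inj j : injective (fun a : 'I_(part_size f j).+1 =>
        (tagged_as (Tagged (fun j => 'I_(part_size f j).+1) a)
                  (s (Tagged (fun j => 'I_(part_size f j).+1) a)) : 'I_(part_size f j).+1)).
      move=> a b e.
      have := congr1 (Tagged (fun j => 'I_(part_size f j).+1)) e.
      rewrite !Tagged_as_eq' ?(eqP (sP _)) // => /perm_inj e'; exact: eq_from_Tagged e'.
    exists ([ffun j => perm (inj j)] : DF f) => //.
    apply/permP => -[j a]; rewrite /Phi !permE /= ffunE permE.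
    by rewrite Tagged_as_eq' // (eqP (sP _)).
  - case=> F _ ->; rewrite inE; apply/forallP => x; by rewrite /Phi permE.
rewrite card_imset // cardsT card_dep_ffun foldrE big_map.
rewrite big_enum /=; apply: eq_bigr => j _.
exact: card_Sn.
Qed.

Close Scope group_scope.

Theorem proposition2p8 (n t : nat) (f : 'I_n.+1 -> 'I_t) :
  2 <= n ->
  (forall j : 'I_t, exists i : 'I_n.+1, f i = j) ->
  [/\ CoxK f \isog ProdSym f,
      #|CoxK f| = \prod_(j < t) (part_size f j).+1`!,
      (CoxK f = AutK f <->
         (forall j k : 'I_t, j != k -> part_size f j != part_size f k)) &
      (forall S T : {set vert n t}, is_nface f S -> is_nface f T ->
         exists2 g, g \in CoxK f & g @: S = T)].
Proof.
move=> _ _; rewrite CoxE; split.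
- exact: Blk_isog.
- by rewrite -(card_injm (cm_injm f) (subsetT _)) cm_im card_ProdSym.
- split.
  + move=> e j k njk; apply/negP => /eqP ps.
    have [g [gA gB]] := swap_exists njk ps.
    by move: gB; rewrite e gA.
  + by move=> H; apply/eqP; rewrite eqEsubset Blk_sub_Aut Aut_sub_Blk.
- move=> S T hS hT; have [g gB e] := nface_trans hS hT; by exists g.
Qed.
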